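(* Let $0<p<1$, $q=1-p$, let $\mathcal{B}=\{(x_i,t_i)\}_{i\in\mathbb{Z}}\subset\mathbb{Z}^2$ be a boundary set and $\tilde L$ the associated region, and let $(x^0,t^0)\in\tilde L$. Then the function on $\mathcal{B}$ $$\mathcal{G}^{\mathcal{B}}((x',t')|(x^0,t^0))=P_e^{\mathcal{B}}((x',t'))\,G((x',t')|(x^0,t^0)),\qquad (x',t')\in\mathcal{B},$$ defines a probability measure on $\mathcal{B}$, i.e. it is nonnegative and $\sum_{(x',t')\in\mathcal{B}}\mathcal{G}^{\mathcal{B}}((x',t')|(x^0,t^0))=1$.
   Context: Points of $\mathbb{Z}^2$ are written $(x,t)$ (space, time). A boundary set is $\mathcal{B}=\{(x_i,t_i)\}_{i\in\mathbb{Z}}$ such that for every $i\in\mathbb{Z}$ either $(x_{i+1},t_{i+1})=(x_i+1,t_i)$ or $(x_{i+1},t_{i+1})=(x_i,t_i-1)$. Its region is $\tilde L=\bigcup_{(x,t)\in\mathcal{B}}\{(x',t')\in\mathbb{Z}^2: x'\le x,\ t'\le t\}$, and $\tilde L^c=\mathbb{Z}^2\setminus\tilde L$. Single-step weights of the directed Bernoulli random walk: $W(\{(x,t),(x,t+1)\})=q$, $W(\{(x,t),(x+1,t+1)\})=p$, all other one-step weights zero. The one-particle Green function is $G((x,t)|(x^0,t^0))=\binom{t-t^0}{x-x^0}p^{x-x^0}q^{t-t^0-(x-x^0)}$ if $0\le x-x^0\le t-t^0$ and $0$ otherwise (the total weight of directed paths from $(x^0,t^0)$ to $(x,t)$). The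 exit probability at $(x,t)\in\mathcal{B}$ is $P_e^{\mathcal{B}}((x,t))=\sum_{x'':\,(x'',t+1)\in\tilde L^c}W(\{(x,t),(x'',t+1)\})$. *)

(* Defs.v *)
From Stdlib Require Import Reals ZArith Lia Lra ClassicalEpsilon.
From Coquelicot Require Import Coquelicot.
Open Scope R_scope.

(* A boundary set given by its enumeration i |-> (xs i, ts i), i in Z. *)
Definition is_boundary (xs ts : Z -> Z) : Prop :=
  forall i : Z,
    (xs (i + 1)%Z = (xs i + 1)%Z /\ ts (i + 1)%Z = ts i) \/
    (xs (i + 1)%Z = xs i /\ ts (i + 1)%Z = (ts i - 1)%Z).

Definition inL (xs ts : Z -> Z) (x t : Z) : Prop :=
  exists i : Z, (x <= xs i)%Z /\ (t <= ts i)%Z.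

Definition W (p : R) (x t x' t' : Z) : R :=
  if Z.eq_dec t' (t + 1) then
    if Z.eq_dec x' x then 1 - p
    else if Z.eq_dec x' (x + 1) then p else 0
  else 0.

Definition Green (p : R) (x t x0 t0 : Z) : R :=
  if Z_le_dec 0 (x - x0) then
    if Z_le_dec (x - x0) (t - t0) then
      Binomial.C (Z.to_nat (t - t0)) (Z.to_nat (x - x0)) * p ^ (Z.to_nat (x - x0))
      * (1 - p) ^ (Z.to_nat ((t - t0) - (x - x0)))
    else 0
  else 0.

Definition notinL_ind (xs ts : Z -> Z) (x t : Z) : R :=
  if excluded_middle_informative (inL xs ts x t) then 0 else 1.

(* Exit probability P_e((x,t)) = sum over x'' with (x'',t+1) in L~^c of
   W({(x,t),(x'',t+1)}).  Only x'' = x and x'' = x+1 can carry nonzero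
   weight, so the sum is written out over these two terms. *)
Definition Pexit (p : R) (xs ts : Z -> Z) (x t : Z) : R :=
  notinL_ind xs ts x (t + 1) * W p x t x (t + 1)
  + notinL_ind xs ts (x + 1) (t + 1) * W p x t (x + 1) (t + 1).

Definition GB (p : R) (xs ts : Z -> Z) (x0 t0 : Z) (i : Z) : R :=
  Pexit p xs ts (xs i) (ts i) * Green p (xs i) (ts i) x0 t0.

Definition Zpartial (f : Z -> R) (N : nat) : R :=
  sum_f_R0 (fun k => f (Z.of_nat k - Z.of_nat N)%Z) (2 * N).

(* Main.v *)
Require Import Defs.
From Stdlib Require Import Reals ZArith Lia Lra ClassicalEpsilon.
From Coquelicot Require Import Coquelicot.
Open Scope R_scope.

Lemma C_nonneg n k : 0 <= Binomial.C n k.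
Proof.
  unfold Binomial.C. apply Rle_mult_inv_pos. apply pos_INR.
  apply Rmult_lt_0_compat; apply lt_0_INR, lt_O_fact.
Qed.

Lemma C_pos n k : (k <= n)%nat -> 0 < Binomial.C n k.
Proof.
  intros _. unfold Binomial.C. apply Rdiv_lt_0_compat. apply lt_0_INR, lt_O_fact.
  apply Rmult_lt_0_compat; apply lt_0_INR, lt_O_fact.
Qed.

Lemma C_nn n : Binomial.C n n = 1.
Proof.
  unfold Binomial.C. rewrite Nat.sub_diag. simpl. field.
  apply not_0_INR, fact_neq_0.
Qed.

Lemma C_n0 n : Binomial.C n 0 = 1.
Proof.
  unfold Binomial.C. rewrite Nat.sub_0_r. simpl. field.
  apply not_0_INR, fact_neq_0.
Qed.

Lemma Green_val p x0 t0 (A B : nat) :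
  Green p (x0 + Z.of_nat A) (t0 + Z.of_nat (A + B)) x0 t0
  = Binomial.C (A + B) A * p ^ A * (1 - p) ^ B.
Proof.
  unfold Green.
  destruct (Z_le_dec 0 (x0 + Z.of_nat A - x0)); [|lia].
  destruct (Z_le_dec (x0 + Z.of_nat A - x0) (t0 + Z.of_nat (A + B) - t0)); [|lia].
  replace (x0 + Z.of_nat A - x0)%Z with (Z.of_nat A) by lia.
  replace (t0 + Z.of_nat (A + B) - t0)%Z with (Z.of_nat (A+B)) by lia.
  replace (Z.of_nat (A + B) - Z.of_nat A)%Z with (Z.of_nat B) by lia.
  rewrite !Nat2Z.id. reflexivity.
Qed.

Lemma Green_z1 p x t x0 t0 : (x - x0 < 0)%Z -> Green p x t x0 t0 = 0.
Proof. intros. unfold Green. destruct (Z_le_dec 0 (x - x0)); [lia|auto]. Qed.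

Lemma Green_z2 p x t x0 t0 : (x - x0 > t - t0)%Z -> Green p x t x0 t0 = 0.
Proof. intros. unfold Green. destruct (Z_le_dec 0 (x - x0)); auto.
  destruct (Z_le_dec (x - x0) (t - t0)); [lia|auto]. Qed.

Lemma Green_gen x t x0 t0 : (0 <= x - x0)%Z -> (x - x0 <= t - t0)%Z ->
  exists A B, x = (x0 + Z.of_nat A)%Z /\ t = (t0 + Z.of_nat (A + B))%Z.
Proof.
  intros. exists (Z.to_nat (x - x0)), (Z.to_nat ((t - t0) - (x - x0))). split; lia.
Qed.

Lemma Green_nonneg p x t x0 t0 : 0 <= p <= 1 -> 0 <= Green p x t x0 t0.
Proof.
  intros Hp.
  destruct (Z_lt_le_dec (x - x0) 0). rewrite Green_z1; [lra|lia].
  destruct (Z_lt_le_dec (t - t0) (x - x0)). rewrite Green_z2; [lra|lia].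
  destruct (Green_gen x t x0 t0) as (A & B & -> & ->); auto.
  rewrite Green_val. apply Rmult_le_pos. apply Rmult_le_pos. apply C_nonneg.
  apply pow_le; lra. apply pow_le; lra.
Qed.

Lemma Green_pascal p x t x0 t0 : (x <> x0 \/ t <> t0) ->
  Green p x t x0 t0 = p * Green p (x - 1) (t - 1) x0 t0 + (1 - p) * Green p x (t - 1) x0 t0.
Proof.
  intros Hne.
  destruct (Z_lt_le_dec (x - x0) 0).
  { rewrite !Green_z1 by lia. ring. }
  destruct (Z_lt_le_dec (t - t0) (x - x0)).
  { rewrite Green_z2 by lia. rewrite (Green_z2 p x (t-1)) by lia.
    destruct (Z.eq_dec x x0). rewrite Green_z1 by lia. ring.
    rewrite Green_z2 by lia. ring. }
  destruct (Green_gen x t x0 t0) as (A & B & -> & ->); auto.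
  rewrite Green_val.
  destruct A as [|A'].
  -
    destruct B as [|B']. simpl in Hne; lia.
    rewrite Green_z1 by lia.
    replace (x0 + Z.of_nat 0)%Z with (x0 + Z.of_nat 0)%Z by lia.
    replace (t0 + Z.of_nat (0 + S B') - 1)%Z with (t0 + Z.of_nat (0 + B'))%Z by lia.
    rewrite Green_val. rewrite !C_n0. simpl. ring.
  - destruct B as [|B'].
    + rewrite (Green_z2 p (x0 + Z.of_nat (S A'))) by lia.
      replace (x0 + Z.of_nat (S A') - 1)%Z with (x0 + Z.of_nat A')%Z by lia.
      replace (t0 + Z.of_nat (S A' + 0) - 1)%Z with (t0 + Z.of_nat (A' + 0))%Z by lia.
      rewrite Green_val. rewrite !Nat.add_0_r, !C_nn. simpl. ring.
    + replace (x0 + Z.of_nat (S A') - 1)%Z with (x0 + Z.of_nat A')%Z by lia.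
      replace (t0 + Z.of_nat (S A' + S B') - 1)%Z with (t0 + Z.of_nat (A' + S B'))%Z by lia.
      rewrite Green_val.
      replace (t0 + Z.of_nat (A' + S B'))%Z with (t0 + Z.of_nat (S A' + B'))%Z by lia.
      rewrite Green_val.
      replace (S A' + S B')%nat with (S (A' + S B')) by lia.
      rewrite <- pascal by lia.
      replace (A' + S B')%nat with (S A' + B')%nat by lia.
      simpl. ring.
Qed.

Lemma bd_diag xs ts : is_boundary xs ts ->
  forall i, (xs i - ts i = xs 0 - ts 0 + i)%Z.
Proof.
  intros Hb i. pattern i. apply Z.peano_ind. lia.
  - intros n H. specialize (Hb n). rewrite <- Z.add_1_r. destruct Hb; lia.
  - intros n H. specialize (Hb (Z.pred n)). rewrite Z.add_1_r, Z.succ_pred in Hb. destruct Hb; lia.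
Qed.

Lemma bd_mono_n xs ts : is_boundary xs ts ->
  forall j n, (xs j <= xs (j + Z.of_nat n) /\ ts (j + Z.of_nat n) <= ts j)%Z.
Proof.
  intros Hb j n. induction n. replace (j + Z.of_nat 0)%Z with j by lia. lia.
  replace (j + Z.of_nat (S n))%Z with (j + Z.of_nat n + 1)%Z by lia.
  specialize (Hb (j + Z.of_nat n)%Z). lia.
Qed.

Lemma bd_mono xs ts : is_boundary xs ts ->
  forall j i, (j <= i)%Z -> (xs j <= xs i /\ ts i <= ts j)%Z.
Proof.
  intros Hb j i H. replace i with (j + Z.of_nat (Z.to_nat (i - j)))%Z by lia.
  apply bd_mono_n; auto.
Qed.

Lemma inL_diag xs ts : is_boundary xs ts ->
  forall x t i, inL xs ts x t -> (x - t = xs i - ts i)%Z -> (x <= xs i)%Z.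
Proof.
  intros Hb x t i [j [H1 H2]] Hd.
  destruct (Z_le_dec j i).
  - pose proof (bd_mono xs ts Hb j i l). lia.
  - pose proof (bd_mono xs ts Hb i j ltac:(lia)). lia.
Qed.

Lemma notinL_0 xs ts x t : inL xs ts x t -> notinL_ind xs ts x t = 0.
Proof. intros H. unfold notinL_ind. destruct excluded_middle_informative; tauto. Qed.

Lemma notinL_1 xs ts x t : ~ inL xs ts x t -> notinL_ind xs ts x t = 1.
Proof. intros H. unfold notinL_ind. destruct excluded_middle_informative; tauto. Qed.

Lemma W_up p x t : W p x t x (t + 1) = 1 - p.
Proof. unfold W. destruct (Z.eq_dec (t+1) (t+1)); [|lia]. destruct (Z.eq_dec x x); [auto|lia]. Qed.

Lemma W_diag p x t : W p x t (x + 1) (t + 1) = p.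
Proof. unfold W. destruct (Z.eq_dec (t+1) (t+1)); [|lia]. destruct (Z.eq_dec (x+1) x); [lia|].
  destruct (Z.eq_dec (x+1) (x+1)); [auto|lia]. Qed.

Lemma Pexit_right (p : R) xs ts j : is_boundary xs ts ->
  xs j = (xs (j - 1)%Z + 1)%Z -> ts j = ts (j - 1)%Z ->
  Pexit p xs ts (xs j) (ts j) = 1.
Proof.
  intros Hb H1 H2. unfold Pexit. rewrite W_up, W_diag.
  rewrite (notinL_1 xs ts (xs j)). rewrite notinL_1. ring.
  - intros HL. pose proof (inL_diag xs ts Hb _ _ j HL ltac:(lia)). lia.
  - intros HL. pose proof (inL_diag xs ts Hb _ _ (j-1) HL ltac:(lia)). lia.
Qed.

Lemma Pexit_down (p : R) xs ts j : is_boundary xs ts ->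
  xs j = xs (j - 1)%Z -> ts j = (ts (j - 1)%Z - 1)%Z ->
  Pexit p xs ts (xs j) (ts j) = p.
Proof.
  intros Hb H1 H2. unfold Pexit. rewrite W_up, W_diag.
  rewrite (notinL_0 xs ts (xs j)). rewrite notinL_1. ring.
  - intros HL. pose proof (inL_diag xs ts Hb _ _ j HL ltac:(lia)). lia.
  - exists (j - 1)%Z%Z. lia.
Qed.

Lemma bd_step xs ts j : is_boundary xs ts ->
  (xs j = (xs (j - 1)%Z + 1)%Z /\ ts j = ts (j - 1)%Z) \/
  (xs j = xs (j - 1)%Z /\ ts j = (ts (j - 1)%Z - 1)%Z).
Proof.
  intros Hb. specialize (Hb (j - 1)%Z). replace (j - 1 + 1)%Z with j in Hb by lia. exact Hb.
Qed.

Fixpoint sumn (f : nat -> R) (n : nat) : R :=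
  match n with O => 0 | S m => sumn f m + f m end.

Definition Tsum p x0 t0 d n :=
  sumn (fun k => Green p (x0 + Z.of_nat k) (x0 + Z.of_nat k - d) x0 t0) n.

Definition Sa p x0 t0 d a := Tsum p x0 t0 d (Z.to_nat (a - x0 + 1)).

Lemma Sa_step p x0 t0 d a :
  Sa p x0 t0 d a = Sa p x0 t0 d (a - 1) + Green p a (a - d) x0 t0.
Proof.
  unfold Sa. destruct (Z_lt_le_dec a x0).
  - rewrite Green_z1 by lia. replace (Z.to_nat (a - x0 + 1)) with 0%nat by lia.
    replace (Z.to_nat (a - 1 - x0 + 1)) with 0%nat by lia. simpl. ring.
  - replace (Z.to_nat (a - x0 + 1)) with (S (Z.to_nat (a - x0))) by lia.
    replace (Z.to_nat (a - 1 - x0 + 1)) with (Z.to_nat (a - x0)) by lia.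
    unfold Tsum at 1. simpl. fold (Tsum p x0 t0 d (Z.to_nat (a - x0))).
    replace (x0 + Z.of_nat (Z.to_nat (a - x0)))%Z with a by lia. reflexivity.
Qed.

Lemma Tsum_star p x0 t0 d : (d < x0 - t0)%Z -> forall n,
  (1 - p) * Tsum p x0 t0 d n + p * Green p (x0 + Z.of_nat n - 1) (x0 + Z.of_nat n - 1 - d) x0 t0
  = (1 - p) * Tsum p x0 t0 (d + 1) n.
Proof.
  intros Hd n. induction n.
  - unfold Tsum; simpl. rewrite Green_z1 by lia. ring.
  - unfold Tsum in *. cbn [sumn].
    replace (x0 + Z.of_nat (S n) - 1)%Z with (x0 + Z.of_nat n)%Z by lia.
    rewrite (Green_pascal p (x0 + Z.of_nat n) (x0 + Z.of_nat n - d)) by lia.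
    replace (x0 + Z.of_nat n - d - 1)%Z with (x0 + Z.of_nat n - (d + 1))%Z by lia.
    replace (x0 + Z.of_nat n - 1 - d)%Z with (x0 + Z.of_nat n - (d + 1))%Z in IHn by lia.
    set (S1 := sumn _ n) in *. set (S2 := sumn _ n) in *.
    set (A := Green p (x0 + Z.of_nat n - 1) _ x0 t0) in *.
    set (B := Green p (x0 + Z.of_nat n) _ x0 t0) in *.
    transitivity ((1 - p) * S1 + p * A + (1 - p) * B). ring.
    rewrite IHn. ring.
Qed.

Lemma Sa_star p x0 t0 d a : (d < x0 - t0)%Z ->
  (1 - p) * Sa p x0 t0 d a + p * Green p a (a - d) x0 t0 = (1 - p) * Sa p x0 t0 (d + 1) a.
Proof.
  intros Hd. unfold Sa. destruct (Z_lt_le_dec a x0).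
  - rewrite Green_z1 by lia. replace (Z.to_nat (a - x0 + 1)) with 0%nat by lia. unfold Tsum; simpl. ring.
  - pose proof (Tsum_star p x0 t0 d Hd (Z.to_nat (a - x0 + 1))).
    replace (x0 + Z.of_nat (Z.to_nat (a - x0 + 1)) - 1)%Z with a in H by lia. exact H.
Qed.

Lemma Sa_2star p x0 t0 a : (x0 <= a)%Z ->
  (1 - p) * Sa p x0 t0 (x0 - t0) a + p * Green p a (a - (x0 - t0)) x0 t0 = 1.
Proof.
  intros Ha. unfold Sa.
  replace (Z.to_nat (a - x0 + 1)) with (S (Z.to_nat (a - x0))) by lia.
  replace a with (x0 + Z.of_nat (Z.to_nat (a - x0)))%Z at 2 3 by lia.
  generalize (Z.to_nat (a - x0)). intros n.
  assert (HG : forall k, Green p (x0 + Z.of_nat k) (x0 + Z.of_nat k - (x0 - t0)) x0 t0 = p ^ k).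
  { intros k. replace (x0 + Z.of_nat k - (x0 - t0))%Z with (t0 + Z.of_nat (k + 0))%Z by lia.
    rewrite Green_val. rewrite Nat.add_0_r, C_nn. simpl. ring. }
  rewrite HG. unfold Tsum.
  assert (Hs : forall m, sumn (fun k => Green p (x0 + Z.of_nat k) (x0 + Z.of_nat k - (x0 - t0)) x0 t0) m
     = sumn (fun k => p ^ k) m).
  { induction m; cbn [sumn]; [reflexivity|]. rewrite IHm, HG. reflexivity. }
  rewrite Hs. induction n.
  - simpl. ring.
  - cbn [sumn] in *. transitivity ((1 - p) * (sumn (fun k => p ^ k) n + p ^ n) + p * p ^ n + ((1-p) + p - 1) * p ^ (S n)).
    simpl; ring. rewrite IHn. ring.
Qed.

Lemma alg1 (p G X Y : R) : (1-p)*X + p*G = 1 -> p*G + (1-p)*(X - Y) = 1 - (1-p)*Y.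
Proof. intros H. transitivity ((1-p)*X + p*G - (1-p)*Y); [ring| rewrite H; ring]. Qed.

Lemma alg2 (p G X Y X' : R) : (1-p)*X + p*G = (1-p)*X' ->
  p*G + (1-p)*(X-Y) + (1 - (1-p)*X') = 1 - (1-p)*Y.
Proof. intros H. rewrite <- H. ring. Qed.

Lemma GB_formula p xs ts x0 t0 j : is_boundary xs ts ->
  GB p xs ts x0 t0 j = p * Green p (xs j) (ts j) x0 t0
    + (1 - p) * (Sa p x0 t0 (xs j - ts j) (xs j) - Sa p x0 t0 (xs j - ts j) (xs (j - 1)%Z)).
Proof.
  intros Hb. unfold GB.
  rewrite (Sa_step p x0 t0 _ (xs j)).
  replace (xs j - (xs j - ts j))%Z with (ts j) by lia.
  destruct (bd_step xs ts j Hb) as [[H1 H2]|[H1 H2]].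
  - rewrite Pexit_right by auto. replace (xs j - 1)%Z with (xs (j - 1)%Z) by lia. ring.
  - rewrite Pexit_down by auto. rewrite <- H1.
    rewrite (Sa_step p x0 t0 _ (xs j)).
    replace (xs j - (xs j - ts j))%Z with (ts j) by lia. ring.
Qed.

Lemma GB_nonneg p xs ts x0 t0 j : 0 < p < 1 -> is_boundary xs ts -> 0 <= GB p xs ts x0 t0 j.
Proof.
  intros Hp Hb. unfold GB. apply Rmult_le_pos; [|apply Green_nonneg; lra].
  destruct (bd_step xs ts j Hb) as [[H1 H2]|[H1 H2]].
  - rewrite Pexit_right by auto. lra.
  - rewrite Pexit_down by auto. lra.
Qed.

Lemma GB_zero p xs ts x0 t0 j : is_boundary xs ts ->
  (xs j - ts j > x0 - t0)%Z -> GB p xs ts x0 t0 j = 0.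
Proof. intros Hb H. unfold GB. rewrite Green_z2 by lia. ring. Qed.

Lemma telescope p xs ts x0 t0 : is_boundary xs ts -> inL xs ts x0 t0 ->
  forall n : nat,
  let I := ((x0 - t0) - (xs 0 - ts 0))%Z in
  let j := (I - Z.of_nat n)%Z in
  sum_f_R0 (fun k => GB p xs ts x0 t0 (j + Z.of_nat k)) n
  = 1 - (1 - p) * Sa p x0 t0 (xs j - ts j) (xs (j - 1)%Z).
Proof.
  intros Hb HL n I. pose proof (bd_diag xs ts Hb) as Hd. induction n; intros j.
  - subst j. cbn [sum_f_R0]. replace (I - Z.of_nat 0 + Z.of_nat 0)%Z with I by lia.
    replace (I - Z.of_nat 0)%Z with I by lia.
    rewrite GB_formula by auto.
    assert (HI : (xs I - ts I = x0 - t0)%Z) by (pose proof (Hd I); unfold I in *; lia).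
    rewrite HI.
    pose proof (Sa_2star p x0 t0 (xs I)) as H2.
    replace (xs I - (x0 - t0))%Z with (ts I) in H2 by lia.
    assert (x0 <= xs I)%Z by (apply (inL_diag xs ts Hb x0 t0 I HL); lia).
    specialize (H2 H). apply alg1; exact H2.
  - rewrite decomp_sum by lia. simpl pred.
    cbv zeta in IHn.
    rewrite (sum_eq _ (fun k => GB p xs ts x0 t0 (I - Z.of_nat n + Z.of_nat k))).
    2:{ intros i _. f_equal. subst j. lia. }
    rewrite IHn. subst j.
    replace (I - Z.of_nat (S n) + Z.of_nat 0)%Z with (I - Z.of_nat (S n))%Z by lia.
    set (j := (I - Z.of_nat (S n))%Z).
    rewrite GB_formula by auto.
    replace (I - Z.of_nat n)%Z with (j + 1)%Z by (unfold j; lia).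
    replace (j + 1 - 1)%Z with j by lia.
    assert (Hdj : (xs (j + 1)%Z - ts (j + 1)%Z = (xs j - ts j) + 1)%Z) by (pose proof (Hd j); pose proof (Hd (j+1)%Z); lia).
    rewrite Hdj.
    pose proof (Sa_star p x0 t0 (xs j - ts j) (xs j)) as H3.
    replace (xs j - (xs j - ts j))%Z with (ts j) in H3 by lia.
    assert (xs j - ts j < x0 - t0)%Z by (pose proof (Hd j); unfold j, I in *; lia).
    specialize (H3 H). apply alg2; exact H3.
Qed.

Lemma binom_lim (q : R) (k : nat) : 0 < q < 1 ->
  is_lim_seq (fun n => Binomial.C (k + n) k * q ^ n) 0.
Proof.
  intros Hq.
  set (a := fun n => Binomial.C (k + n) k * q ^ n).
  assert (Hpos : forall n, 0 < a n).
  { intros n. unfold a. apply Rmult_lt_0_compat. apply C_pos; lia. apply pow_lt; lra. }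
  assert (Hr : forall n, Rabs (a (S n) / a n) = q + q * INR k * / INR (S n)).
  { intros n. rewrite Rabs_pos_eq.
    2:{ apply Rlt_le, Rdiv_lt_0_compat; auto. }
    unfold a. replace (k + S n)%nat with (S (k + n)) by lia.
    rewrite pascal_step2 by lia. replace (S (k + n) - k)%nat with (S n) by lia.
    assert (0 < Binomial.C (k + n) k) by (apply C_pos; lia).
    assert (0 < q ^ n) by (apply pow_lt; lra).
    assert (0 < INR (S n)) by (apply lt_0_INR; lia).
    rewrite (S_INR (k + n)), plus_INR. change (q ^ S n) with (q * q ^ n). rewrite S_INR in *. field. repeat split; lra. }
  assert (Hl : is_lim_seq (fun n => Rabs (a (S n) / a n)) q).
  { apply is_lim_seq_ext with (fun n => q + q * INR k * / INR (S n)).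
    intros n; rewrite Hr; reflexivity.
    assert (HH : is_lim_seq (fun n => q + q * INR k * / INR (S n)) (q + q * INR k * 0)).
    2:{ rewrite Rmult_0_r, Rplus_0_r in HH. exact HH. }
    apply is_lim_seq_plus'. apply is_lim_seq_const.
    apply is_lim_seq_mult'. apply is_lim_seq_const.
    assert (H := is_lim_seq_inv (fun n => INR (S n)) p_infty).
    simpl in H. apply H; [|discriminate].
    apply (is_lim_seq_incr_1 INR p_infty). apply is_lim_seq_INR. }
  assert (Hs := ex_series_DAlembert a q (proj2 Hq) (fun n => Rgt_not_eq _ _ (Hpos n)) Hl).
  apply ex_series_lim_0 in Hs.
  apply is_lim_seq_ext with (fun n => Rabs (a n)); auto.
  intros n. apply Rabs_pos_eq. apply Rlt_le, Hpos.
Qed.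

Lemma Tsum_nonneg p x0 t0 d n : 0 <= p <= 1 -> 0 <= Tsum p x0 t0 d n.
Proof.
  intros Hp. unfold Tsum. induction n; cbn [sumn]. lra.
  pose proof (Green_nonneg p (x0 + Z.of_nat n) (x0 + Z.of_nat n - d) x0 t0 Hp). lra.
Qed.

Lemma Tsum_mono p x0 t0 d n m : 0 <= p <= 1 -> (n <= m)%nat -> Tsum p x0 t0 d n <= Tsum p x0 t0 d m.
Proof.
  intros Hp H. induction H. lra. unfold Tsum in *. cbn [sumn].
  pose proof (Green_nonneg p (x0 + Z.of_nat m) (x0 + Z.of_nat m - d) x0 t0 Hp). lra.
Qed.

Lemma term_lim p x0 t0 D k : 0 < p < 1 ->
  is_lim_seq (fun N : nat => Green p (x0 + Z.of_nat k) (x0 + Z.of_nat k - (D - Z.of_nat N)) x0 t0) 0.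
Proof.
  intros Hp. set (I := (x0 - t0 - D)%Z).
  set (m0 := Z.to_nat (Z.abs I)). set (e := Z.to_nat (I + Z.of_nat m0)).
  apply (is_lim_seq_incr_n _ m0).
  apply is_lim_seq_ext with (fun M => p ^ k * (Binomial.C (k + (M + e)) k * (1 - p) ^ (M + e))).
  { intros M.
    replace (x0 + Z.of_nat k - (D - Z.of_nat (M + m0)))%Z with (t0 + Z.of_nat (k + (M + e)))%Z
      by (unfold e, m0, I; lia).
    rewrite Green_val. ring. }
  replace 0 with (p ^ k * 0) by ring.
  apply is_lim_seq_mult'. apply is_lim_seq_const.
  apply (is_lim_seq_incr_n (fun n => Binomial.C (k + n) k * (1 - p) ^ n) e).
  apply binom_lim. lra.
Qed.

Lemma Tsum_lim p x0 t0 D K : 0 < p < 1 ->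
  is_lim_seq (fun N : nat => Tsum p x0 t0 (D - Z.of_nat N) K) 0.
Proof.
  intros Hp. induction K.
  - unfold Tsum. simpl. apply is_lim_seq_const.
  - unfold Tsum in *. cbn [sumn]. replace 0 with (0 + 0) by ring.
    apply is_lim_seq_plus'. exact IHK. apply term_lim; auto.
Qed.

Lemma sum_zero (f : nat -> R) n : (forall i, (i <= n)%nat -> f i = 0) -> sum_f_R0 f n = 0.
Proof.
  intros H. induction n; simpl. apply H; lia. rewrite IHn, H; [ring|lia|intros; apply H; lia].
Qed.

Lemma Zpartial_eq p xs ts x0 t0 : is_boundary xs ts -> inL xs ts x0 t0 ->
  forall N : nat, (Z.abs ((x0 - t0) - (xs 0 - ts 0)) < Z.of_nat N)%Z ->
  Zpartial (GB p xs ts x0 t0) N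
  = 1 - (1 - p) * Sa p x0 t0 (xs (- Z.of_nat N)%Z - ts (- Z.of_nat N)%Z) (xs (- Z.of_nat N - 1)%Z).
Proof.
  intros Hb HL N HN. pose proof (bd_diag xs ts Hb) as Hd.
  set (I := ((x0 - t0) - (xs 0 - ts 0))%Z) in *.
  set (m := Z.to_nat (I + Z.of_nat N)).
  unfold Zpartial. rewrite (tech2 _ m (2 * N)) by (unfold m; lia).
  rewrite (sum_zero (fun i => GB p xs ts x0 t0 (Z.of_nat (S m + i) - Z.of_nat N))).
  2:{ intros i _. apply GB_zero; auto. pose proof (Hd (Z.of_nat (S m + i) - Z.of_nat N)%Z).
      unfold m, I in *. lia. }
  pose proof (telescope p xs ts x0 t0 Hb HL m) as HT. cbv zeta in HT. fold I in HT.
  replace (I - Z.of_nat m)%Z with (- Z.of_nat N)%Z in HT by (unfold m; lia).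
  rewrite Rplus_0_r. rewrite <- HT. apply sum_eq. intros i _. f_equal. lia.
Qed.

Theorem proposition3 (p : R) (xs ts : Z -> Z) (x0 t0 : Z) :
  0 < p < 1 ->
  is_boundary xs ts ->
  inL xs ts x0 t0 ->
  (forall i : Z, 0 <= GB p xs ts x0 t0 i) /\
  is_lim_seq (Zpartial (GB p xs ts x0 t0)) 1.
Proof.
  intros Hp Hb HL. split.
  { intros i. apply GB_nonneg; auto. }
  pose proof (bd_diag xs ts Hb) as Hd.
  set (I := ((x0 - t0) - (xs 0 - ts 0))%Z).
  set (u := fun N : nat => Sa p x0 t0 (xs (- Z.of_nat N)%Z - ts (- Z.of_nat N)%Z) (xs (- Z.of_nat N - 1)%Z)).
  set (D := (xs 0%Z - ts 0%Z)%Z).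
  set (K := Z.to_nat (xs 0%Z - x0 + 1)%Z).
  assert (Hu : is_lim_seq u 0).
  { apply is_lim_seq_le_le with (fun _ => 0) (fun N => Tsum p x0 t0 (D - Z.of_nat N) K).
    - intros N. unfold u, Sa. split. apply Tsum_nonneg; lra.
      replace (xs (- Z.of_nat N)%Z - ts (- Z.of_nat N)%Z)%Z with (D - Z.of_nat N)%Z
        by (pose proof (Hd (- Z.of_nat N)%Z); unfold D; lia).
      apply Tsum_mono. lra.
      pose proof (bd_mono xs ts Hb (- Z.of_nat N - 1)%Z 0%Z ltac:(lia)). unfold K. lia.
    - apply is_lim_seq_const.
    - apply Tsum_lim; auto. }
  apply is_lim_seq_ext_loc with (fun N => 1 - (1 - p) * u N).
  - exists (S (Z.to_nat (Z.abs I))). intros N HN. unfold u.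
    rewrite Zpartial_eq; auto. unfold I in HN. lia.
  - assert (HH : is_lim_seq (fun N => 1 - (1 - p) * u N) (1 - (1 - p) * 0)).
    { apply is_lim_seq_minus'. apply is_lim_seq_const.
      apply is_lim_seq_mult'. apply is_lim_seq_const. exact Hu. }
    rewrite Rmult_0_r, Rminus_0_r in HH. exact HH.
Qed.
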